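(* Let $n \ge 2$, let $m_1,\dots,m_n>0$ be masses, and let $q_1=(x_1,y_1),\dots,q_n=(x_n,y_n)\in\mathbb{R}^2$ be pairwise distinct points. For $1\le i\neq j\le n$ let $v_{i,j}\in\mathbb{R}^{2n}$ be the twist vector defined in the context. Then the linear subspace of $\mathbb{R}^{2n}$ spanned by $\{v_{i,j} : 1\le i\neq j\le n\}$ has dimension $2n-3$, unless all $n$ points $q_1,\dots,q_n$ lie on a common line, in which case the dimension is $n-1$.
   Context: Configurations are written in flattened coordinates $(x_1,y_1,x_2,y_2,\ldots,x_n,y_n)\in\mathbb{R}^{2n}$. Write $x_{i,j}=x_i-x_j$ and $y_{i,j}=y_i-y_j$. The twist vector $v_{i,j}$ (for $i\neq j$) at the configuration $(q_1,\dots,q_n)$ is the vector in $\mathbb{R}^{2n}$ whose only possibly nonzero components are: the $x_i$-component $m_j y_{i,j}$, the $y_i$-component $-m_j x_{i,j}$, the $x_j$-component $-m_i y_{i,j}$, and the $y_j$-component $m_i x_{i,j}$; all other components are $0$. (It is the infinitesimal rotation of the pair $q_i,q_j$ about their center of mass.) *)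

(* Defs.v *)
From HB Require Import structures.
From mathcomp Require Import all_boot all_order all_algebra.
Set Implicit Arguments. Unset Strict Implicit. Unset Printing Implicit Defensive.
Import Order.TTheory GRing.Theory Num.Theory.
Local Open Scope ring_scope.

(* Configuration (q_1,...,q_n), q_i = (x i, y i), flattened as
   (x_1,y_1,...,x_n,y_n) in R^(2n): with 0-based indices, the x_i-component
   is coordinate 2*i and the y_i-component is coordinate 2*i+1. *)

Definition twist (R : pzRingType) (n : nat) (m x y : 'I_n -> R) (i j : 'I_n)
  : 'rV[R]_(2 * n) :=
  \row_(k < 2 * n)
    (if (k : nat) == (2 * i)%N then m j * (y i - y j)
     else if (k : nat) == (2 * i).+1 then - (m j * (x i - x j))
     else if (k : nat) == (2 * j)%N then - (m i * (y i - y j))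
     else if (k : nat) == (2 * j).+1 then m i * (x i - x j)
     else 0).

Definition twist_span (R : fieldType) (n : nat) (m x y : 'I_n -> R)
  : {vspace 'rV[R]_(2 * n)} :=
  <<[seq twist m x y i j
      | i <- enum 'I_n, j <- [seq j <- enum 'I_n | j != i]]>>%VS.

Definition collinear (R : pzRingType) (n : nat) (x y : 'I_n -> R) : Prop :=
  exists a b c : R, (a != 0 \/ b != 0) /\ forall i, a * x i + b * y i = c.

(* Main.v *)
Require Import Defs.
From HB Require Import structures.
From mathcomp Require Import all_boot all_order all_algebra.
From mathcomp Require Import zify ring lra.
Set Implicit Arguments. Unset Strict Implicit. Unset Printing Implicit Defensive.
Import Order.TTheory GRing.Theory Num.Theory.
Import VectorInternalTheory.
Local Open Scope ring_scope.

Lemma dim_span_rank (R : fieldType) k (X : seq 'rV[R]_k) :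
  \dim <<X>>%VS = \rank (\matrix_(i < size X) X`_i).
Proof.
rewrite /dimv [span]unlock /span_expanded_def /= genmxE.
have -> : b2mx (in_tuple X) = (\matrix_(i < size X) X`_i) *m lin1_mx v2r.
  apply/row_matrixP => i.
  by rewrite row_mul !rowK mul_rV_lin1 /= (tnth_nth 0).
apply: mxrankMfree; apply/inj_row_free => v.
by rewrite mul_rV_lin1 /= => /eqP; rewrite -(linear0 v2r) => /eqP /v2r_inj.
Qed.

Lemma xo_proof n (i : 'I_n) : (2 * i < 2 * n)%N.
Proof. have := ltn_ord i; lia. Qed.
Lemma yo_proof n (i : 'I_n) : ((2 * i).+1 < 2 * n)%N.
Proof. have := ltn_ord i; lia. Qed.
Definition Xo n (i : 'I_n) : 'I_(2 * n) := Ordinal (xo_proof i).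
Definition Yo n (i : 'I_n) : 'I_(2 * n) := Ordinal (yo_proof i).
Lemma ho_proof n (c : 'I_(2 * n)) : (c./2 < n)%N.
Proof. rewrite ltn_half_double -mul2n; exact: ltn_ord. Qed.
Definition Ho n (c : 'I_(2 * n)) : 'I_n := Ordinal (ho_proof c).

Definition mkvec (R : pzRingType) n (fx fy : 'I_n -> R) : 'rV[R]_(2 * n) :=
  \row_c (if odd c then fy (Ho c) else fx (Ho c)).

Lemma HoX n (i : 'I_n) : Ho (Xo i) = i.
Proof. by apply: val_inj => /=; rewrite mul2n doubleK. Qed.
Lemma HoY n (i : 'I_n) : Ho (Yo i) = i.
Proof. by apply: val_inj => /=; rewrite mul2n uphalf_double. Qed.

Lemma mkvecX (R : pzRingType) n (fx fy : 'I_n -> R) i : mkvec fx fy 0 (Xo i) = fx i.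
Proof. by rewrite mxE /= mul2n odd_double HoX. Qed.
Lemma mkvecY (R : pzRingType) n (fx fy : 'I_n -> R) i : mkvec fx fy 0 (Yo i) = fy i.
Proof. by rewrite mxE /= mul2n odd_double HoY. Qed.

Lemma eq_coord (R : pzRingType) n (u v : 'rV[R]_(2 * n)) :
  (forall i, u 0 (Xo i) = v 0 (Xo i)) -> (forall i, u 0 (Yo i) = v 0 (Yo i)) -> u = v.
Proof.
move=> hx hy; apply/rowP => c.
have hc := odd_double_half c.
case ho: (odd c) hc => hc.
- have -> : c = Yo (Ho c) by apply: val_inj => /=; rewrite -mul2n in hc; lia.
  exact: hy.
- have -> : c = Xo (Ho c) by apply: val_inj => /=; rewrite -mul2n in hc; lia.
  exact: hx.
Qed.
Lemma dot_twist (R : comPzRingType) n (m x y : 'I_n -> R) (u : 'rV[R]_(2 * n)) i j :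
  i != j ->
  (u *m (twist m x y i j)^T) 0 0 =
  u 0 (Xo i) * (m j * (y i - y j)) + u 0 (Yo i) * (- (m j * (x i - x j)))
  + u 0 (Xo j) * (- (m i * (y i - y j))) + u 0 (Yo j) * (m i * (x i - x j)).
Proof.
move=> nij; have nij' : (i : nat) != j by [].
rewrite mxE; under eq_bigr => c _ do rewrite !mxE.
rewrite (bigD1 (Xo i)) //= (bigD1 (Yo i)) /=; last by rewrite -val_eqE /=; lia.
rewrite (bigD1 (Xo j)) /=; last by rewrite -!val_eqE /=; lia.
rewrite (bigD1 (Yo j)) /=; last by rewrite -!val_eqE /=; lia.
rewrite big1 => [|c /andP [/andP [/andP [h1 h2] h3] h4]]; last first.
  move: h1 h2 h3 h4; rewrite -!val_eqE /= => h1 h2 h3 h4.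
  by rewrite (negbTE h1) (negbTE h2) (negbTE h3) (negbTE h4) mulr0.
have e1 : (2 * i == (2 * i).+1)%N = false by lia.
have e2 : (2 * j == 2 * i)%N = false by lia.
have e3 : (2 * j == (2 * i).+1)%N = false by lia.
have e4 : ((2 * j).+1 == 2 * i)%N = false by lia.
have e5 : ((2 * j).+1 == (2 * i).+1)%N = false by lia.
have e6 : ((2 * j).+1 == (2 * j))%N = false by lia.
have e7 : ((2 * i).+1 == (2 * i))%N = false by lia.
have e8 : (2 * i == 2 * j)%N = false by lia.
have e9 : (2 * i == (2 * j).+1)%N = false by lia.
have e10 : ((2 * i).+1 == 2 * j)%N = false by lia.
have e11 : ((2 * i).+1 == (2 * j).+1)%N = false by lia.
have e12 : (2 * j == (2 * j).+1)%N = false by lia.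
rewrite e1 e2 e3 e4 e5 e6 e7 e8 e9 e10 e11 e12 !eqxx addr0; ring.
Qed.

Lemma ker_rank (F : fieldType) N k d (A : 'M[F]_(N, k)) (Bm : 'M_(d, k)) :
  Bm *m A^T = 0 ->
  (forall u : 'rV_k, u *m A^T = 0 -> exists w : 'rV_d, u = w *m Bm) ->
  (forall w : 'rV_d, w *m Bm = 0 -> w = 0) -> \rank A = (k - d)%N.
Proof.
move=> hB hspan hinj.
have rB : \rank Bm = d by apply/eqP; apply: inj_row_free.
have eqK : (kermx A^T == Bm)%MS.
  apply/andP; split; last by rewrite sub_kermx; apply/eqP.
  apply/row_subP => i.
  have := congr1 (row i) (mulmx_ker A^T); rewrite row_mul row0 => /hspan [w ->].
  exact: submxMl.
have := mxrank_ker A^T; rewrite (eqmx_rank eqK) rB mxrank_tr => h.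
have := rank_leq_col A; lia.
Qed.

Definition tws (R : pzRingType) n (m x y : 'I_n -> R) :=
  [seq twist m x y i j | i <- enum 'I_n, j <- [seq j <- enum 'I_n | j != i]].

Lemma mem_tws (R : pzRingType) n (m x y : 'I_n -> R) v :
  v \in tws m x y <-> exists i j, i != j /\ v = twist m x y i j.
Proof.
split.
  move=> /allpairsPdep [i [j [_ hj ->]]]; exists i, j; split => //.
  by move: hj; rewrite mem_filter eq_sym => /andP [].
move=> [i [j [nij ->]]]; apply: (allpairs_f_dep (fun i j => twist m x y i j)).
  by rewrite mem_enum.
by rewrite mem_filter mem_enum eq_sym nij.
Qed.

Definition twA (R : pzRingType) n (m x y : 'I_n -> R) :=
  \matrix_(l < size (tws m x y)) (tws m x y)`_l.

Lemma kerP (R : pzRingType) n (m x y : 'I_n -> R) (u : 'rV[R]_(2 * n)) :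
  u *m (twA m x y)^T = 0 <->
  (forall i j, i != j -> (u *m (twist m x y i j)^T) 0 0 = 0).
Proof.
have entry l : (u *m (twA m x y)^T) 0 l = (u *m ((tws m x y)`_l)^T) 0 0.
  by rewrite !mxE; apply: eq_bigr => c _; rewrite !mxE.
split.
  move=> h i j nij.
  have hin : twist m x y i j \in tws m x y by apply/mem_tws; exists i, j.
  have hl : (index (twist m x y i j) (tws m x y) < size (tws m x y))%N.
    by rewrite index_mem.
  by rewrite -(nth_index 0 hin) -(entry (Ordinal hl)) h mxE.
move=> h; apply/rowP => l; rewrite entry [RHS]mxE.
have /mem_tws [i [j [nij ->]]] : (tws m x y)`_l \in tws m x y by apply: mem_nth.
exact: h.
Qed.

Lemma parL (R : idomainType) (qx qy vx vy wx wy : R) :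
  qx * vy - qy * vx = 0 -> qx * wy - qy * wx = 0 -> vx * wy - vy * wx != 0 ->
  qx = 0 /\ qy = 0.
Proof.
move=> h1 h2 hD.
have ex : qx * (vx * wy - vy * wx) = vx * (qx * wy - qy * wx) - wx * (qx * vy - qy * vx).
  by ring.
have ey : qy * (vx * wy - vy * wx) = vy * (qx * wy - qy * wx) - wy * (qx * vy - qy * vx).
  by ring.
rewrite h1 h2 !mulr0 subr0 in ex ey.
by move/eqP: ex; move/eqP: ey; rewrite !mulf_eq0 (negbTE hD) !orbF => /eqP -> /eqP ->.
Qed.

Lemma sq2_eq0 (R : realDomainType) (a b : R) : (a ^+ 2 + b ^+ 2 == 0) = (a == 0) && (b == 0).
Proof. by rewrite paddr_eq0 ?sqr_ge0 // !sqrf_eq0. Qed.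

Lemma dist_ne0 (R : realDomainType) (x1 y1 x2 y2 : R) :
  (x1, y1) != (x2, y2) -> (x1 - x2) ^+ 2 + (y1 - y2) ^+ 2 != 0.
Proof.
apply: contraNN; rewrite sq2_eq0 !subr_eq0 => /andP [/eqP -> /eqP ->].
by [].
Qed.

Lemma core_c (R : realFieldType) n (x y px py : 'I_n -> R) (a b c : R) (i0 : 'I_n) :
  (forall i j, i != j -> (x i, y i) != (x j, y j)) ->
  (forall i, a * x i + b * y i = c) ->
  (forall i j, i != j -> (px i - px j) * (y i - y j) - (py i - py j) * (x i - x j) = 0) ->
  forall k, a * px k + b * py k = a * px i0 + b * py i0.
Proof.
move=> hd hl hr k.
have [-> //|nk] := eqVneq k i0.
have D := dist_ne0 (hd _ _ nk).
have L : a * (x k - x i0) + b * (y k - y i0) = 0.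
  by rewrite mulrBr mulrBr addrACA -opprD hl hl subrr.
have rel := hr _ _ nk.
set S := a * (px k - px i0) + b * (py k - py i0).
have e1 : (x k - x i0) * S = (px k - px i0) * (a * (x k - x i0) + b * (y k - y i0))
   - b * ((px k - px i0) * (y k - y i0) - (py k - py i0) * (x k - x i0)) by rewrite /S; ring.
have e2 : (y k - y i0) * S = a * ((px k - px i0) * (y k - y i0) - (py k - py i0) * (x k - x i0))
   + (py k - py i0) * (a * (x k - x i0) + b * (y k - y i0)) by rewrite /S; ring.
rewrite L rel !mulr0 subr0 in e1; rewrite L rel !mulr0 addr0 in e2.
have e3 : ((x k - x i0) ^+ 2 + (y k - y i0) ^+ 2) * S = 0.
  by rewrite mulrDl !expr2 -!mulrA e1 e2 !mulr0 addr0.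
move/eqP: e3; rewrite mulf_eq0 (negbTE D) /= /S => /eqP e.
apply/eqP; rewrite -subr_eq0; apply/eqP; rewrite -e; ring.
Qed.

Lemma core_nc (R : realFieldType) n (x y px py : 'I_n -> R) (i0 i1 : 'I_n) :
  i0 != i1 ->
  (forall i j, i != j -> (x i, y i) != (x j, y j)) ->
  ~ collinear x y ->
  (forall i j, i != j -> (px i - px j) * (y i - y j) - (py i - py j) * (x i - x j) = 0) ->
  exists lam a b, forall k, px k = lam * x k + a /\ py k = lam * y k + b.
Proof.
move=> n01 hd hnc hr.
set dx := x i1 - x i0; set dy := y i1 - y i0.
have D : dx ^+ 2 + dy ^+ 2 != 0 by apply: dist_ne0; rewrite eq_sym; apply: hd.
set lam := ((px i1 - px i0) * dx + (py i1 - py i0) * dy) / (dx ^+ 2 + dy ^+ 2).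
set a := px i0 - lam * x i0; set b := py i0 - lam * y i0.
pose Qx k := px k - lam * x k - a; pose Qy k := py k - lam * y k - b.
have Q0x : Qx i0 = 0 by rewrite /Qx /a; ring.
have Q0y : Qy i0 = 0 by rewrite /Qy /b; ring.

have n10 : i1 != i0 by rewrite eq_sym.
have r10 := hr _ _ n10.
rewrite -/dx -/dy in r10.
have Q1x : Qx i1 = 0.
  have e : Qx i1 * (dx ^+ 2 + dy ^+ 2) =
     dy * ((px i1 - px i0) * dy - (py i1 - py i0) * dx).
    rewrite /Qx /a /lam /dx /dy; field; exact: D.
  by move/eqP: e; rewrite r10 mulr0 mulf_eq0 (negbTE D) orbF => /eqP.
have Q1y : Qy i1 = 0.
  have e : Qy i1 * (dx ^+ 2 + dy ^+ 2) =
     - dx * ((px i1 - px i0) * dy - (py i1 - py i0) * dx).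
    rewrite /Qy /b /lam /dx /dy; field; exact: D.
  by move/eqP: e; rewrite r10 mulr0 mulf_eq0 (negbTE D) orbF => /eqP.
have Qr i j : i != j -> (Qx i - Qx j) * (y i - y j) - (Qy i - Qy j) * (x i - x j) = 0.
  move=> nij; rewrite -(hr _ _ nij) /Qx /Qy; ring.
pose cl k := (x k - x i0) * dy - (y k - y i0) * dx.
have caseA l : cl l != 0 -> Qx l = 0 /\ Qy l = 0.
  move=> hc.
  have nl0 : l != i0.
    by apply: contraNneq hc => ->; rewrite /cl !subrr !mul0r subrr.
  have nl1 : l != i1.
    by apply: contraNneq hc => ->; rewrite /cl -/dx -/dy mulrC subrr.
  have h0 := Qr _ _ nl0; have h1 := Qr _ _ nl1.
  rewrite Q0x Q0y !subr0 in h0; rewrite Q1x Q1y !subr0 in h1.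
  apply: (parL h0 h1).
  have -> : (x l - x i0) * (y l - y i1) - (y l - y i0) * (x l - x i1) = - cl l.
    by rewrite /cl /dx /dy; ring.
  by rewrite oppr_eq0.
have [k0 hk0|hnone] := pickP (fun k => cl k != 0); last first.
  exfalso; apply: hnc; exists dy, (- dx), (dy * x i0 - dx * y i0); split.
    move: D; rewrite sq2_eq0 negb_and oppr_eq0 => /orP [h|h]; by [right|left].
  move=> i; have /negbFE/eqP e := hnone i.
  apply/eqP; rewrite -subr_eq0; apply/eqP; rewrite -e /cl; ring.
have [Qk0x Qk0y] := caseA _ hk0.
exists lam, a, b => l.
suff [hx hy] : Qx l = 0 /\ Qy l = 0.
  by split; apply/eqP; rewrite -subr_eq0; apply/eqP; [rewrite -hx /Qx|rewrite -hy /Qy]; ring.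
have [hc|hc] := boolP (cl l != 0); first exact: caseA.
have [-> //|nl0] := eqVneq l i0.
have nlk : l != k0 by apply: contraNneq hc => ->.
have h0 := Qr _ _ nl0; have h1 := Qr _ _ nlk.
rewrite Q0x Q0y !subr0 in h0; rewrite Qk0x Qk0y !subr0 in h1.
apply: (parL h0 h1).
apply/negP => /eqP hvw.
move/negP: (hd _ _ nl0); apply.
move: hc; rewrite negbK => /eqP hc.
have [vx0 vy0] : x l - x i0 = 0 /\ y l - y i0 = 0.
  apply: (parL (vx := dx) (vy := dy) (wx := x k0 - x i0) (wy := y k0 - y i0)).
  - by rewrite -hc /cl.
  - rewrite -[RHS]oppr0 -hvw; ring.
  - have -> : dx * (y k0 - y i0) - dy * (x k0 - x i0) = - cl k0 by rewrite /cl; ring.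
    by rewrite oppr_eq0.
by move/eqP: vx0; move/eqP: vy0; rewrite !subr_eq0 => /eqP -> /eqP ->.
Qed.

Lemma mul_mkrows (R : pzRingType) n d (fx fy : 'I_d -> 'I_n -> R) (w : 'rV[R]_d) :
  w *m (\matrix_r mkvec (fx r) (fy r)) =
  mkvec (fun k => \sum_r w 0 r * fx r k) (fun k => \sum_r w 0 r * fy r k).
Proof.
apply: eq_coord => i; rewrite ?mkvecX ?mkvecY mxE; apply: eq_bigr => r _;
  by rewrite mxE ?mkvecX ?mkvecY.
Qed.

Lemma dot_mkvec (R : comPzRingType) n (m x y : 'I_n -> R) (fx fy : 'I_n -> R) i j :
  i != j ->
  (mkvec fx fy *m (twist m x y i j)^T) 0 0 =
  fx i * (m j * (y i - y j)) + fy i * (- (m j * (x i - x j)))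
  + fx j * (- (m i * (y i - y j))) + fy j * (m i * (x i - x j)).
Proof. by move=> nij; rewrite dot_twist // !mkvecX !mkvecY. Qed.

Lemma ker_rel (R : fieldType) n (m x y : 'I_n -> R) (u : 'rV[R]_(2 * n)) :
  (forall i, m i != 0) -> u *m (twA m x y)^T = 0 ->
  forall i j, i != j ->
  (u 0 (Xo i) / m i - u 0 (Xo j) / m j) * (y i - y j)
  - (u 0 (Yo i) / m i - u 0 (Yo j) / m j) * (x i - x j) = 0.
Proof.
move=> hm /kerP hk i j nij.
have := hk _ _ nij; rewrite dot_twist // => e.
have e2 : m i * m j * ((u 0 (Xo i) / m i - u 0 (Xo j) / m j) * (y i - y j)
  - (u 0 (Yo i) / m i - u 0 (Yo j) / m j) * (x i - x j)) =
  u 0 (Xo i) * (m j * (y i - y j)) + u 0 (Yo i) * (- (m j * (x i - x j)))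
  + u 0 (Xo j) * (- (m i * (y i - y j))) + u 0 (Yo j) * (m i * (x i - x j)).
  by field; rewrite hm hm.
move: e2; rewrite e => /eqP; rewrite !mulf_eq0 (negbTE (hm i)) (negbTE (hm j)) /=.
by move/eqP.
Qed.

Lemma sum3 (R : nmodType) (F : 'I_3 -> R) : \sum_r F r = F 0 + F 1 + F 2.
Proof.
rewrite !big_ord_recr big_ord0 /= add0r.
by congr (_ + _ + _); congr F; apply: val_inj.
Qed.

Lemma rank_nc (R : realFieldType) n (m x y : 'I_n -> R) :
  (2 <= n)%N -> (forall i, 0 < m i) ->
  (forall i j, i != j -> (x i, y i) != (x j, y j)) ->
  ~ collinear x y -> \rank (twA m x y) = (2 * n - 3)%N.
Proof.
move=> hn hm0 hd hnc.
have hm i : m i != 0 by rewrite lt0r_neq0.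
have h0n : (0 < n)%N by lia.
have h1n : (1 < n)%N by lia.
pose i0 : 'I_n := Ordinal h0n; pose i1 : 'I_n := Ordinal h1n.
have n01 : i0 != i1 by [].
pose fx (r : 'I_3) (k : 'I_n) := if r == 0%N :> nat then m k * x k
   else if r == 1%N :> nat then m k else 0.
pose fy (r : 'I_3) (k : 'I_n) := if r == 0%N :> nat then m k * y k
   else if r == 2%N :> nat then m k else 0.
apply: (ker_rank (Bm := \matrix_r mkvec (fx r) (fy r))).
- apply/row_matrixP => r; rewrite row_mul rowK row0; apply/kerP => i j nij.
  rewrite dot_mkvec // /fx /fy.
  by case: r => [[|[|[|r]]] hr] //=; ring.
- move=> u hu.
  have [lam [a [b h]]] := core_nc n01 hd hnc (ker_rel hm hu).
  exists (\row_(r < 3) (if r == 0%N :> nat then lam else if r == 1%N :> nat then a else b)).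
  rewrite mul_mkrows; apply: eq_coord => k;
    rewrite ?mkvecX ?mkvecY !sum3 /= !mxE /= /fx /fy /=.
  + have -> : u 0 (Xo k) = m k * (u 0 (Xo k) / m k) by field; rewrite hm.
    by rewrite (h k).1; ring.
  + have -> : u 0 (Yo k) = m k * (u 0 (Yo k) / m k) by field; rewrite hm.
    by rewrite (h k).2; ring.
- move=> w; rewrite mul_mkrows => hw.
  have ex k : w 0 0 * x k + w 0 1 = 0.
    have := congr1 (fun v : 'rV_(2 * n) => v 0 (Xo k)) hw.
    rewrite /= mkvecX mxE !sum3 /= /fx /= => e.
    have : m k * (w 0 0 * x k + w 0 1) = 0 by rewrite -[RHS]e; ring.
    by move/eqP; rewrite mulf_eq0 (negbTE (hm k)) /= => /eqP.
  have ey k : w 0 0 * y k + w 0 2 = 0.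
    have := congr1 (fun v : 'rV_(2 * n) => v 0 (Yo k)) hw.
    rewrite /= mkvecY mxE !sum3 /= /fy /= => e.
    have : m k * (w 0 0 * y k + w 0 2) = 0 by rewrite -[RHS]e; ring.
    by move/eqP; rewrite mulf_eq0 (negbTE (hm k)) /= => /eqP.
  have D := dist_ne0 (hd _ _ n01).
  have w0 : w 0 0 = 0.
    have : w 0 0 * ((x i0 - x i1) ^+ 2 + (y i0 - y i1) ^+ 2) = 0.
      have e1 := ex i0; have e2 := ex i1; have e3 := ey i0; have e4 := ey i1.
      have -> : w 0 0 * ((x i0 - x i1) ^+ 2 + (y i0 - y i1) ^+ 2) =
        (x i0 - x i1) * ((w 0 0 * x i0 + w 0 1) - (w 0 0 * x i1 + w 0 1))
        + (y i0 - y i1) * ((w 0 0 * y i0 + w 0 2) - (w 0 0 * y i1 + w 0 2)) by ring.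
      by rewrite e1 e2 e3 e4 subrr !mulr0 addr0.
    by move/eqP; rewrite mulf_eq0 (negbTE D) orbF => /eqP.
  have w1 : w 0 1 = 0 by have := ex i0; rewrite w0 mul0r add0r.
  have w2 : w 0 2 = 0 by have := ey i0; rewrite w0 mul0r add0r.
  apply/rowP => r; rewrite mxE.
  by case: r => [[|[|[|r]]] hr] //=; [rewrite -w0|rewrite -w1|rewrite -w2]; congr (w 0 _); apply: val_inj.
Qed.

Lemma sum_sel (R : pzRingType) n (g : 'I_n.+1 -> R) (k : 'I_n) (A B : R) :
  \sum_(r < n.+1) g r * (if (r : nat) == k then A else if (r : nat) == n then B else 0)
  = g (widen_ord (leqnSn n) k) * A + g ord_max * B.
Proof.
rewrite big_ord_recr /= gtn_eqF // eqxx; congr (_ + _).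
rewrite (bigD1 k) //= eqxx big1 ?addr0 // => r hr.
have hr' : ((r : nat) == k) = false by exact: negbTE hr.
by rewrite hr' ltn_eqF // mulr0.
Qed.

Lemma rank_c (R : realFieldType) n (m x y : 'I_n -> R) :
  (2 <= n)%N -> (forall i, 0 < m i) ->
  (forall i j, i != j -> (x i, y i) != (x j, y j)) ->
  collinear x y -> \rank (twA m x y) = (2 * n - n.+1)%N.
Proof.
move=> hn hm0 hd [a [b [c [hab hl]]]].
have hm i : m i != 0 by rewrite lt0r_neq0.
have h0n : (0 < n)%N by lia.
pose i0 : 'I_n := Ordinal h0n.
have S2 : a ^+ 2 + b ^+ 2 != 0 by rewrite sq2_eq0 negb_and; case: hab => ->; rewrite ?orbT.
pose fx (r : 'I_n.+1) (k : 'I_n) := if (r : nat) == k then m k * - b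
   else if (r : nat) == n then m k * a else 0.
pose fy (r : 'I_n.+1) (k : 'I_n) := if (r : nat) == k then m k * a
   else if (r : nat) == n then m k * b else 0.
apply: (ker_rank (Bm := \matrix_r mkvec (fx r) (fy r))).
- apply/row_matrixP => r; rewrite row_mul rowK row0; apply/kerP => i j nij.
  rewrite dot_mkvec // /fx /fy.
  have L : a * (x i - x j) + b * (y i - y j) = 0.
    by rewrite mulrBr mulrBr addrACA -opprD hl hl subrr.
  have [rn|rn] := eqVneq (r : nat) n.
    rewrite rn !gtn_eqF //; ring.
  have [ri|ri] := eqVneq (r : nat) i; have [rj|rj] := eqVneq (r : nat) j.
  + by move/negP: nij; case; apply/eqP/val_inj; rewrite /= -ri -rj.
  + transitivity (- (m i * m j) * (a * (x i - x j) + b * (y i - y j))); first ring.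
    by rewrite L mulr0.
  + transitivity ((m i * m j) * (a * (x i - x j) + b * (y i - y j))); first ring.
    by rewrite L mulr0.
  + ring.
- move=> u hu.
  pose px k := u 0 (Xo k) / m k; pose py k := u 0 (Yo k) / m k.
  have hc := core_c i0 hd hl (ker_rel hm hu).
  pose s0 := (a * px i0 + b * py i0) / (a ^+ 2 + b ^+ 2).
  pose t k := (- b * px k + a * py k) / (a ^+ 2 + b ^+ 2).
  exists (\row_(r < n.+1) (if (insub (r : nat) : option 'I_n) is Some k then t k else s0)).
  rewrite mul_mkrows; apply: eq_coord => k; rewrite ?mkvecX ?mkvecY sum_sel !mxE /= valK
     insubF ?ltnn //.
  + have -> : u 0 (Xo k) = m k * px k by rewrite /px; field; rewrite hm.
    rewrite /t /s0 -(hc k) /px /py; field; by rewrite S2 hm.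
  + have -> : u 0 (Yo k) = m k * py k by rewrite /py; field; rewrite hm.
    rewrite /t /s0 -(hc k) /px /py; field; by rewrite S2 hm.
- move=> w; rewrite mul_mkrows => hw.
  have e k : w 0 (widen_ord (leqnSn n) k) = 0 /\ w 0 ord_max = 0.
    have := congr1 (fun v : 'rV_(2 * n) => v 0 (Xo k)) hw.
    rewrite /= mkvecX mxE sum_sel => e1.
    have := congr1 (fun v : 'rV_(2 * n) => v 0 (Yo k)) hw.
    rewrite /= mkvecY mxE sum_sel => e2.
    set t := w 0 _ in e1 e2 *; set s := w 0 ord_max in e1 e2 *.
    have f1 : m k * ((a ^+ 2 + b ^+ 2) * t) = 0.
      transitivity (- b * (t * (m k * - b) + s * (m k * a)) + a * (t * (m k * a) + s * (m k * b))).
        ring.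
      by rewrite e1 e2 !mulr0 addr0.
    have f2 : m k * ((a ^+ 2 + b ^+ 2) * s) = 0.
      transitivity (a * (t * (m k * - b) + s * (m k * a)) + b * (t * (m k * a) + s * (m k * b))).
        ring.
      by rewrite e1 e2 !mulr0 addr0.
    move/eqP: f1; move/eqP: f2; rewrite !mulf_eq0 (negbTE (hm k)) (negbTE S2) /=.
    by move=> /eqP -> /eqP ->.
  apply/rowP => r; rewrite mxE.
  case: (ltnP r n) => hr.
    have -> : r = widen_ord (leqnSn n) (Ordinal hr) by apply: val_inj.
    exact: (e _).1.
  have -> : r = ord_max by apply: val_inj => /=; have := ltn_ord r; lia.
  exact: (e i0).2.
Qed.

Theorem mainTheorem1 (R : realFieldType) (n : nat) (m x y : 'I_n -> R) :
  (2 <= n)%N ->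
  (forall i, 0 < m i) ->
  (forall i j, i != j -> (x i, y i) != (x j, y j)) ->
  (collinear x y -> \dim (twist_span m x y) = (n - 1)%N) /\
  (~ collinear x y -> \dim (twist_span m x y) = (2 * n - 3)%N).
Proof.
move=> hn hm hd.
have -> : \dim (twist_span m x y) = \rank (twA m x y) := dim_span_rank _.
split => hc.
  rewrite (rank_c hn hm hd hc); lia.
exact: rank_nc.
Qed.
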